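(* Let $\theta\in[\pi,2\pi)$. Then for all $x,y\in S_\theta$, $p_{S_\theta}(x,y)\le s_{S_\theta}(x,y)$, and this inequality is sharp.
   Context: $S_\theta=\{x\in\mathbb{C}:0<\arg(x)<\theta\}$. For a domain $G\subsetneq\mathbb{C}$, $d_G(x)=\inf\{|x-z|:z\in\partial G\}$, $s_G(x,y)=\frac{|x-y|}{\inf_{z\in\partial G}(|x-z|+|z-y|)}$, $p_G(x,y)=\frac{|x-y|}{\sqrt{|x-y|^2+4d_G(x)d_G(y)}}$. *)

(* Defs.v *)
From HB Require Import structures.
From mathcomp Require Import all_boot all_order all_algebra.
From mathcomp Require Import all_classical all_reals all_analysis.
Set Implicit Arguments. Unset Strict Implicit. Unset Printing Implicit Defensive.
Import Order.TTheory GRing.Theory Num.Theory numFieldNormedType.Exports.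
Local Open Scope classical_set_scope.
Local Open Scope ring_scope.

(* Euclidean modulus |z| of z = z.1 + i z.2 *)
Definition cabs {R : realType} (z : R * R) : R := Num.sqrt (z.1 ^+ 2 + z.2 ^+ 2).

Definition csub {R : realType} (x z : R * R) : R * R := (x.1 - z.1, x.2 - z.2).

(* S_theta = {x : 0 < arg x < theta}, arg taken in [0, 2pi):
   x = r e^{it} with r > 0 and 0 < t < theta *)
Definition Stheta {R : realType} (theta : R) : set (R * R) :=
  [set x | exists r t : R, 0 < r /\ 0 < t /\ t < theta /\ x = (r * cos t, r * sin t)].

(* topological boundary of G (product topology on R*R = Euclidean topology) *)
Definition bdry {R : realType} (G : set (R * R)) : set (R * R) :=
  closure G `\` interior G.

Definition dG {R : realType} (G : set (R * R)) (x : R * R) : R :=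
  inf [set cabs (csub x z) | z in bdry G].

Definition sG {R : realType} (G : set (R * R)) (x y : R * R) : R :=
  cabs (csub x y) / inf [set cabs (csub x z) + cabs (csub z y) | z in bdry G].

Definition pG {R : realType} (G : set (R * R)) (x y : R * R) : R :=
  cabs (csub x y) / Num.sqrt (cabs (csub x y) ^+ 2 + 4 * dG G x * dG G y).

(* Main.v *)
Require Import Defs.
From HB Require Import structures.
From mathcomp Require Import all_boot all_order all_algebra.
From mathcomp Require Import all_classical all_reals all_analysis.
From mathcomp Require Import ring lra.
Import Order.TTheory GRing.Theory Num.Theory numFieldNormedType.Exports.
Local Open Scope classical_set_scope.
Local Open Scope ring_scope.
Section Aux.
Variable R : realType.
Implicit Types x y z a b : R * R.

Lemma cabs_ge0 z : 0 <= cabs z.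
Proof. exact: sqrtr_ge0. Qed.

Lemma cabs_sqr z : cabs z ^+ 2 = z.1 ^+ 2 + z.2 ^+ 2.
Proof. by rewrite /cabs sqr_sqrtr // addr_ge0 // sqr_ge0. Qed.

Lemma cabs_pair (a b : R) : cabs (a, b) = Num.sqrt (a ^+ 2 + b ^+ 2).
Proof. by []. Qed.

Lemma cabs_scale (k a b : R) : cabs (k * a, k * b) = `|k| * cabs (a, b).
Proof.
rewrite /cabs /= !exprMn -mulrDr sqrtrM ?sqr_ge0 //.
by rewrite sqrtr_sqr.
Qed.

Lemma cs_ineq x y : x.1 * y.1 + x.2 * y.2 <= cabs x * cabs y.
Proof.
have [h|h] := lerP (x.1 * y.1 + x.2 * y.2) 0.
  by apply: le_trans h _; rewrite mulr_ge0 // cabs_ge0.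
rewrite -(ger0_norm (ltW h)) -sqrtr_sqr /cabs -sqrtrM ?addr_ge0 ?sqr_ge0 //.
rewrite ler_sqrt ?mulr_ge0 ?addr_ge0 ?sqr_ge0 //.
have : 0 <= (x.1 * y.2 - x.2 * y.1) ^+ 2 by apply: sqr_ge0.
move=> H; nra.
Qed.

Lemma cabs_tri x y z : cabs (csub x y) <= cabs (csub x z) + cabs (csub z y).
Proof.
rewrite -[X in X <= _]ger0_norm ?cabs_ge0 // -[X in _ <= X]ger0_norm ?addr_ge0 ?cabs_ge0 //.
rewrite -ler_sqr ?nnegrE ?normr_ge0 // !real_normK ?num_real //.
rewrite sqrrD !cabs_sqr.
have := cs_ineq (csub x z) (csub z y).
rewrite /csub /= => H.
nra.
Qed.

Lemma cabs_eq0 z : cabs z = 0 -> z.1 = 0 /\ z.2 = 0.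
Proof.
move=> h; have := cabs_sqr z; rewrite h expr0n /= => h2.
have h1 : z.1 ^+ 2 = 0 by have := sqr_ge0 z.1; have := sqr_ge0 z.2; lra.
have h3 : z.2 ^+ 2 = 0 by have := sqr_ge0 z.1; have := sqr_ge0 z.2; lra.
by move: h1 h3 => /eqP; rewrite sqrf_eq0 => /eqP -> /eqP; rewrite sqrf_eq0 => /eqP ->.
Qed.


Lemma key_ineq x y a b :
  0 < cabs (csub x a) -> 0 < cabs (csub y b) ->
  cabs (csub x ((cabs (csub y b) * a.1 + cabs (csub x a) * b.1) / (cabs (csub x a) + cabs (csub y b)),
                (cabs (csub y b) * a.2 + cabs (csub x a) * b.2) / (cabs (csub x a) + cabs (csub y b))))
  + cabs (csub ((cabs (csub y b) * a.1 + cabs (csub x a) * b.1) / (cabs (csub x a) + cabs (csub y b)),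
                (cabs (csub y b) * a.2 + cabs (csub x a) * b.2) / (cabs (csub x a) + cabs (csub y b))) y) <=
    Num.sqrt (cabs (csub x y) ^+ 2 + 4 * cabs (csub x a) * cabs (csub y b)).
Proof.
set Na := cabs (csub x a); set Nb := cabs (csub y b); set S := Na + Nb.
set z := (_, _).
move=> hNa hNb.
set A := cabs (csub x z); set B := cabs (csub z y).
have hA0 : 0 <= A by apply: cabs_ge0.
have hB0 : 0 <= B by apply: cabs_ge0.
have hS : 0 < S by rewrite /S addr_gt0.
have hS0 : S != 0 by rewrite gt_eqF.
have hNa2 : Na ^+ 2 = (x.1 - a.1) ^+ 2 + (x.2 - a.2) ^+ 2 by rewrite /Na cabs_sqr.
have hNb2 : Nb ^+ 2 = (y.1 - b.1) ^+ 2 + (y.2 - b.2) ^+ 2 by rewrite /Nb cabs_sqr.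
have hA2 : A ^+ 2 = (x.1 - z.1) ^+ 2 + (x.2 - z.2) ^+ 2 by rewrite /A cabs_sqr.
have hB2 : B ^+ 2 = (z.1 - y.1) ^+ 2 + (z.2 - y.2) ^+ 2 by rewrite /B cabs_sqr.
have hD : cabs (csub x y) ^+ 2 = (x.1 - y.1) ^+ 2 + (x.2 - y.2) ^+ 2 by rewrite cabs_sqr.
have Hcs := cs_ineq (csub x a) (csub y b).
rewrite -/Na -/Nb /= in Hcs.
set uw := (x.1 - a.1) * (b.1 - a.1) + (x.2 - a.2) * (b.2 - a.2).
set vw := (y.1 - b.1) * (b.1 - a.1) + (y.2 - b.2) * (b.2 - a.2).
set ww := (b.1 - a.1) ^+ 2 + (b.2 - a.2) ^+ 2.
have Hid : S * (Nb * A ^+ 2 + Na * B ^+ 2) =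
   Na * Nb * (S ^+ 2 + 2 * (vw - uw) + ww)
   + S * (Nb * ((x.1 - a.1) ^+ 2 + (x.2 - a.2) ^+ 2 - Na ^+ 2)
          + Na * ((y.1 - b.1) ^+ 2 + (y.2 - b.2) ^+ 2 - Nb ^+ 2)).
  rewrite hA2 hB2 /z /= /uw /vw /ww /S. field.
  by rewrite -/S.
rewrite -hNa2 -hNb2 !subrr !mulr0 addr0 mulr0 addr0 in Hid.
have H1 : 2 * Na * Nb * A * B <= Nb ^+ 2 * A ^+ 2 + Na ^+ 2 * B ^+ 2.
  have := sqr_ge0 (Nb * A - Na * B); nra.
have Hsq : (A + B) ^+ 2 <= cabs (csub x y) ^+ 2 + 4 * Na * Nb.
  have hNN : 0 < Na * Nb by rewrite mulr_gt0.
  rewrite -(ler_pM2l hNN).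
  apply: (@le_trans _ _ (S * (Nb * A ^+ 2 + Na * B ^+ 2))).
    rewrite /S; nra.
  rewrite Hid ler_pM2l // hD /S.
  rewrite /uw /vw /ww; nra.
rewrite -(ger0_norm (addr_ge0 hA0 hB0)) -sqrtr_sqr.
exact: ler_wsqrtr.
Qed.
End Aux.
Section Geo.
Variable R : realType.
Implicit Types (th : R) (w : R * R).

Definition Lf th w := sin th * w.1 - cos th * w.2.
Definition Gs th := [set w | 0 < w.2 \/ 0 < Lf th w].
Definition Bs th := [set w | (w.2 <= 0 /\ Lf th w <= 0) /\ (w.2 = 0 \/ Lf th w = 0)].

Lemma Lf_polar th r t : Lf th (r * cos t, r * sin t) = r * sin (th - t).
Proof. rewrite /Lf /= sinB; ring. Qed.

Lemma sin_th_le0 th : pi <= th -> th < 2 * pi -> sin th <= 0.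
Proof.
move=> h1 h2.
have -> : th = (th - pi) + pi by ring.
rewrite sinDpi oppr_le0 sin_ge0_pi //.
apply/andP; split; lra.
Qed.

Lemma Stheta_sub th : pi <= th -> th < 2 * pi -> Stheta th `<=` Gs th.
Proof.
move=> h1 h2 w [r [t [hr [ht0 [htth ->]]]]].
have [htpi|htpi] := ltP t pi.
  left => /=; rewrite mulr_gt0 // sin_gt0_pi //; apply/andP; split => //.
right; rewrite Lf_polar mulr_gt0 // sin_gt0_pi //; apply/andP; split; lra.
Qed.

Lemma abs_le_cabs w : `|w.1| <= cabs w.
Proof.
rewrite /cabs -sqrtr_sqr ler_wsqrtr //.
by rewrite lerDl sqr_ge0.
Qed.

Lemma abs2_le_cabs w : `|w.2| <= cabs w.
Proof.
rewrite /cabs -sqrtr_sqr ler_wsqrtr //.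
by rewrite lerDr sqr_ge0.
Qed.

Lemma Gs_sub th : pi <= th -> th < 2 * pi -> Gs th `<=` Stheta th.
Proof.
move=> h1 h2 w hw.
have hsth := @sin_th_le0 th h1 h2.
have pi0 := pi_gt0 R.
set r := cabs w.
have hr : 0 < r.
  rewrite lt_neqAle cabs_ge0 andbT; apply/negP => /eqP/esym/cabs_eq0 [e1 e2].
  move: hw; rewrite /Gs /Lf /= e1 e2 !mulr0 subrr ltxx; by case.
have hr0 : r != 0 by rewrite gt_eqF.
set c := w.1 / r.
have hc : `|c| <= 1.
  by rewrite /c normrM normfV (gtr0_norm hr) ler_pdivrMr // mul1r abs_le_cabs.
have hcI : c \in `[(-1), 1].
  by rewrite in_itv /=; rewrite -ler_norml.
have hc1 : -1 <= c <= 1 by rewrite -ler_norml.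
set t0 := acos c.
have hcos : cos t0 = c by rewrite /t0 acosK.
have hsin : sin t0 = `|w.2| / r.
  rewrite /t0 sin_acos //.
  have -> : 1 - c ^+ 2 = (w.2 / r) ^+ 2.
    have hr2 : r ^+ 2 = w.1 ^+ 2 + w.2 ^+ 2 by rewrite /r cabs_sqr.
    rewrite /c !expr_div_n; apply: (@mulIf _ (r ^+ 2)); first by rewrite expf_neq0.
    rewrite mulrBl !divfK ?expf_neq0 // mul1r hr2; ring.
  by rewrite sqrtr_sqr normrM normfV (gtr0_norm hr).
have ht0a : 0 <= t0 by apply: acos_ge0.
have ht0b : t0 <= pi by apply: acos_lepi.
have hw1 : w.1 = r * cos t0 by rewrite hcos /c mulrC divfK.
have [hw2|hw2] := leP 0 w.2.
  have hw2' : w.2 = r * sin t0 by rewrite hsin (ger0_norm hw2) mulrC divfK.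
  exists r, t0; split => //; split; last split.
  - rewrite lt_neqAle ht0a andbT; apply/negP => /eqP ht.
    move: hw; rewrite /Gs /= hw2' /Lf hw1 hw2' -ht sin0 cos0 mulr0 ltxx mulr1 mulr0 subr0.
    case => // h; nra.
  - rewrite lt_neqAle (le_trans ht0b h1) andbT; apply/negP => /eqP ht.
    have thpi : th = pi by apply/eqP; rewrite eq_le h1 -ht ht0b.
    move: hw; rewrite /Gs /= hw2' /Lf hw1 hw2' ht thpi sinpi mulr0 ltxx; case => // h.
    rewrite mul0r sub0r in h. rewrite cospi in h. lra.
  - by rewrite -hw1 -hw2'; case: w {hw hr hr0 c hc hcI hc1 hcos hsin hw1 hw2 hw2' r t0 ht0a ht0b}.
set t := pi *+ 2 - t0.
have hct : cos t = cos t0 by rewrite /t cosB cos2pi sin2pi; ring.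
have hst : sin t = - sin t0 by rewrite /t sinB cos2pi sin2pi; ring.
have hw1' : w.1 = r * cos t by rewrite hct.
have hw2' : w.2 = r * sin t by rewrite hst hsin (ltr0_norm hw2) mulrN mulrC divfK // opprK.
have hwe : w = (r * cos t, r * sin t) by rewrite -hw1' -hw2'; case: (w).
exists r, t; split => //; split; last split => //.
  rewrite /t -mulr_natr; lra.
rewrite ltNge; apply/negP => htt.
move: hw; rewrite /Gs /= hwe Lf_polar /=.
have : 0 <= sin (t - th).
  apply: sin_ge0_pi; apply/andP; split; first lra.
  rewrite /t -mulr_natr; rewrite -mulr_natr in h2; lra.
have -> : th - t = - (t - th) by ring.
rewrite sinN => hs.
case => h.
  have : r * sin t < 0 by rewrite -hw2'. lra.
have : r * - sin (t - th) <= 0 by rewrite mulrN oppr_le0 mulr_ge0 // ltW.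
lra.
Qed.

Lemma Stheta_eq th : pi <= th -> th < 2 * pi -> Stheta th = Gs th.
Proof.
move=> h1 h2; rewrite predeqE => w; split; [exact: Stheta_sub | exact: Gs_sub].
Qed.

Lemma ballE (z v : R * R) (d : R) :
  ball z d v <-> (`|z.1 - v.1| < d /\ `|z.2 - v.2| < d).
Proof. by split; [move=> [] /=; rewrite /ball /= | move=> [h1 h2]; split]. Qed.

Lemma Lf_lip th z v : `|Lf th v - Lf th z| <= `|z.1 - v.1| + `|z.2 - v.2|.
Proof.
have -> : Lf th v - Lf th z = sin th * (v.1 - z.1) - cos th * (v.2 - z.2) by rewrite /Lf; ring.
apply: le_trans (ler_normB _ _) _; rewrite !normrM (distrC v.1) (distrC v.2).
by apply: lerD; apply: ler_piMl => //; [apply: sin_max | apply: cos_max].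
Qed.

Lemma Gs_nbhs th w : Gs th w -> nbhs w (Gs th).
Proof.
move=> hw; apply/nbhs_ballP.
case: hw => h.
  exists w.2 => // v /ballE [_ h2]; left.
  move: h2; rewrite ltr_norml => /andP [a b]; lra.
exists (Lf th w / 2); first by rewrite /= divr_gt0.
move=> v /ballE [h1 h2]; right.
have := Lf_lip th w v; rewrite ler_norml => /andP [a b]; lra.
Qed.

Lemma bdry_eq th : pi <= th -> th < 2 * pi -> bdry (Stheta th) = Bs th.
Proof.
move=> h1 h2; rewrite /bdry (@Stheta_eq th h1 h2) predeqE => z; split.
  move=> [hcl hint].
  have hnG : ~ Gs th z by move=> hz; apply: hint; exact: Gs_nbhs.
  have hz2 : z.2 <= 0 by rewrite leNgt; apply/negP => h; apply: hnG; left.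
  have hzL : Lf th z <= 0 by rewrite leNgt; apply/negP => h; apply: hnG; right.
  split => //.
  have [e2|e2] := eqVneq z.2 0; first by left.
  have [eL|eL] := eqVneq (Lf th z) 0; first by right.
  have hz2' : z.2 < 0 by rewrite lt_neqAle e2.
  have hzL' : Lf th z < 0 by rewrite lt_neqAle eL.
  set e := Num.min (- z.2) (- Lf th z / 2).
  have he : 0 < e by rewrite lt_min; apply/andP; split; [lra|rewrite divr_gt0 //; lra].
  have [v [hv hvb]] : Gs th `&` ball z e !=set0.
    apply: hcl; apply/nbhs_ballP; exists e => //.
  move/ballE: hvb => [b1 b2].
  have e1 : e <= - z.2 by rewrite ge_min lexx.
  have e3 : e <= - Lf th z / 2 by rewrite ge_min lexx orbT.
  have := Lf_lip th z v; rewrite ler_norml => /andP [a b].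
  have := b2; rewrite ltr_norml => /andP [c3 c4].
  exfalso; case: hv => hv; lra.
move=> [[hz2 hzL] hor]; split.
  move=> B /nbhs_ballP [e /= he hB].
  case: hor => hor.
    exists (z.1, z.2 + e / 2); split.
      by left => /=; rewrite hor add0r divr_gt0.
    apply: hB; apply/ballE => /=; rewrite subrr normr0 opprD addNKr normrN gtr0_norm ?divr_gt0 //.
    split => //; lra.
  exists (z.1 + e / 2 * sin th, z.2 - e / 2 * cos th); split.
    rewrite /Gs /=; right; have -> : Lf th (z.1 + e / 2 * sin th, z.2 - e / 2 * cos th) =
       Lf th z + e / 2 * (cos th ^+ 2 + sin th ^+ 2) by rewrite /Lf /=; ring.
    by rewrite cos2Dsin2 mulr1 hor add0r divr_gt0.
  apply: hB; apply/ballE => /=; split.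
    have -> : z.1 - (z.1 + e / 2 * sin th) = - (e / 2 * sin th) by ring.
    rewrite normrN normrM gtr0_norm ?divr_gt0 //.
    rewrite mulrC; apply: (le_lt_trans (ler_piMl _ (sin_max th))); [lra|lra].
  have -> : z.2 - (z.2 - e / 2 * cos th) = e / 2 * cos th by ring.
  rewrite normrM gtr0_norm ?divr_gt0 //.
  rewrite mulrC; apply: (le_lt_trans (ler_piMl _ (cos_max th))); [lra|lra].
move=> hint; have := nbhs_singleton hint; case => h; lra.
Qed.

Lemma seg_t1 (P0 Q0 P1 Q1 : R) : P0 <= 0 -> Q0 <= 0 -> 0 < P1 ->
  exists t, (0 <= t /\ t <= 1) /\ P0 + t * (P1 - P0) <= 0 /\ Q0 + t * (Q1 - Q0) <= 0 /\
    (P0 + t * (P1 - P0) = 0 \/ Q0 + t * (Q1 - Q0) = 0).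
Proof.
move=> hP0 hQ0 hP1.
have hd : 0 < P1 - P0 by lra.
set t0 := - P0 / (P1 - P0).
have ht0 : t0 * (P1 - P0) = - P0 by rewrite /t0 divfK // gt_eqF.
have ht00 : 0 <= t0 by rewrite /t0 divr_ge0 //; lra.
have ht01 : t0 <= 1 by rewrite /t0 ler_pdivrMr //; rewrite mul1r; lra.
have [hQ|hQ] := lerP (Q0 + t0 * (Q1 - Q0)) 0.
  by exists t0; split; [lra|split; [lra|split; [lra|left; lra]]].
have hdq : 0 < Q1 - Q0.
  rewrite ltNge; apply/negP => h.
  have : t0 * (Q1 - Q0) <= 0 by rewrite mulr_ge0_le0.
  lra.
set t1 := - Q0 / (Q1 - Q0).
have ht1 : t1 * (Q1 - Q0) = - Q0 by rewrite /t1 divfK // gt_eqF.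
have ht10 : 0 <= t1 by rewrite /t1 divr_ge0 //; lra.
have ht1t0 : t1 <= t0.
  rewrite -(ler_pM2r hdq); lra.
have hP : t1 * (P1 - P0) <= t0 * (P1 - P0) by rewrite ler_pM2r.
exists t1; split; [lra|split; [lra|split; [lra|right; lra]]].
Qed.

Lemma seg_t (P0 Q0 P1 Q1 : R) : P0 <= 0 -> Q0 <= 0 -> (0 < P1 \/ 0 < Q1) ->
  exists t, (0 <= t /\ t <= 1) /\ P0 + t * (P1 - P0) <= 0 /\ Q0 + t * (Q1 - Q0) <= 0 /\
    (P0 + t * (P1 - P0) = 0 \/ Q0 + t * (Q1 - Q0) = 0).
Proof.
move=> hP0 hQ0 [h|h]; first exact: seg_t1.
have [t [ht [h1 [h2 h3]]]] := @seg_t1 Q0 P0 Q1 P1 hQ0 hP0 h.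

by exists t; split => //; split => //; split => //; case: h3; [right|left].
Qed.

Lemma csub_pos th x a : Gs th x -> Bs th a -> 0 < cabs (csub x a).
Proof.
move=> hx [[ha2 haL] _].
rewrite lt_neqAle cabs_ge0 andbT; apply/negP => /eqP/esym/cabs_eq0 [/= e1 e2].
have ex1 : x.1 = a.1 by lra.
have ex2 : x.2 = a.2 by lra.
case: hx => h; first lra.
by move: h; rewrite /Lf ex1 ex2 => h; move: haL; rewrite /Lf; lra.
Qed.

Lemma seg_geo th x y z : Gs th x -> z.2 <= 0 -> Lf th z <= 0 ->
  exists z', Bs th z' /\
    cabs (csub x z') + cabs (csub z' y) <= cabs (csub x z) + cabs (csub z y).
Proof.
move=> hx hz2 hzL.
have hor : 0 < x.2 \/ 0 < Lf th x by [].
have [t [[t0 t1] [hP [hQ hor2]]]] := @seg_t _ _ _ _ hz2 hzL hor.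
set z' := (z.1 + t * (x.1 - z.1), z.2 + t * (x.2 - z.2)).
have hL : Lf th z' = Lf th z + t * (Lf th x - Lf th z) by rewrite /z' /Lf /=; ring.
exists z'; split.
  by rewrite /Bs /= hL; split.
have e1 : csub x z' = ((1 - t) * (x.1 - z.1), (1 - t) * (x.2 - z.2)).
  by rewrite /csub /z' /=; congr pair; ring.
have e2 : csub z' z = (t * (x.1 - z.1), t * (x.2 - z.2)).
  by rewrite /csub /z' /=; congr pair; ring.
have hxz : cabs (csub x z) = cabs (x.1 - z.1, x.2 - z.2) by [].
have := @cabs_tri _ z' y z.
rewrite e1 cabs_scale e2 cabs_scale -hxz ger0_norm ?subr_ge0 // ger0_norm //.
all: (try move=> ?); lra.
Qed.

Lemma zero_Bs th : Bs th (0, 0).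
Proof. by rewrite /Bs /Lf /= !mulr0 subrr lexx; split => //; left. Qed.

Lemma hasinf_img (B : set (R * R)) (f : R * R -> R) :
  B (0, 0) -> (forall z, 0 <= f z) -> has_inf [set f z | z in B].
Proof.
move=> hB hf; split; first by exists (f (0, 0)), (0, 0).
by exists 0 => _ [z _ <-].
Qed.

Lemma inf_img_le (B : set (R * R)) (f : R * R -> R) z :
  (forall z, 0 <= f z) -> B z -> inf [set f z | z in B] <= f z.
Proof.
move=> hf hz; apply: ge_inf; last by exists z.
by exists 0 => _ [w _ <-].
Qed.

Lemma inf_img_ge (B : set (R * R)) (f : R * R -> R) m :
  B (0, 0) -> (forall z, B z -> m <= f z) -> m <= inf [set f z | z in B].
Proof.
move=> hB hf; apply: lb_le_inf; first by exists (f (0, 0)), (0, 0).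
by move=> _ [w hw <-]; apply: hf.
Qed.

Lemma sG_ge th x y : pi <= th -> th < 2 * pi ->
  cabs (csub x y) <= inf [set cabs (csub x z) + cabs (csub z y) | z in bdry (Stheta th)].
Proof.
move=> h1 h2; rewrite (@bdry_eq th h1 h2).
apply: inf_img_ge; first exact: zero_Bs.
by move=> z _; apply: cabs_tri.
Qed.

Lemma part1 th x y : pi <= th -> th < 2 * pi -> Stheta th x -> Stheta th y ->
  pG (Stheta th) x y <= sG (Stheta th) x y.
Proof.
move=> h1 h2 hx hy.
have hTN := @sG_ge th x y h1 h2.
rewrite (@Stheta_eq th h1 h2) in hx hy.
rewrite /pG /sG /dG.
rewrite (@bdry_eq th h1 h2) in hTN *.
set N := cabs (csub x y) in hTN *.
have [N0|hN] := eqVneq N 0; first by rewrite N0 !mul0r.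
have hN0 : 0 < N by rewrite lt_neqAle eq_sym hN cabs_ge0.
set Dx := [set cabs (csub x z) | z in Bs th].
set Dy := [set cabs (csub y z) | z in Bs th].
set T := inf _ in hTN *.
set dx := inf Dx. set dy := inf Dy.
have hDx : has_inf Dx by apply: hasinf_img; [apply: zero_Bs | move=> z; apply: cabs_ge0].
have hDy : has_inf Dy by apply: hasinf_img; [apply: zero_Bs | move=> z; apply: cabs_ge0].
have dx0 : 0 <= dx by apply: inf_img_ge; [apply: zero_Bs | move=> z _; apply: cabs_ge0].
have dy0 : 0 <= dy by apply: inf_img_ge; [apply: zero_Bs | move=> z _; apply: cabs_ge0].
have hT0 : 0 < T by apply: lt_le_trans hTN.
have Hmain : forall eps, 0 < eps -> T ^+ 2 <= N ^+ 2 + 4 * (dx + eps) * (dy + eps).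
  move=> eps heps.
  have [_ [a ha <-] hae] := inf_adherent heps hDx.
  have [_ [b hb <-] hbe] := inf_adherent heps hDy.
  rewrite -/dx in hae; rewrite -/dy in hbe.
  have hNa := @csub_pos _ _ _ hx ha.
  have hNb := @csub_pos _ _ _ hy hb.
  have Hk := @key_ineq _ _ _ _ _ hNa hNb.
  set Na := cabs (csub x a) in hae hNa Hk.
  set Nb := cabs (csub y b) in hbe hNb Hk.
  set z := (_, _) in Hk.
  have hS : 0 < Na + Nb by rewrite addr_gt0.
  move: ha hb => [[ha2 haL] _] [[hb2 hbL] _].
  have hz2 : z.2 <= 0.
    rewrite /z /= pmulr_lle0 ?invr_gt0 //.
    have : 0 <= Nb * (- a.2) by apply: mulr_ge0; [exact: ltW | rewrite oppr_ge0].
    have : 0 <= Na * (- b.2) by apply: mulr_ge0; [exact: ltW | rewrite oppr_ge0].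
    lra.
  have hzL : Lf th z <= 0.
    have -> : Lf th z = (Nb * Lf th a + Na * Lf th b) / (Na + Nb).
      rewrite /z /Lf /=; field; by rewrite gt_eqF.
    rewrite pmulr_lle0 ?invr_gt0 //.
    have : 0 <= Nb * (- Lf th a) by apply: mulr_ge0; [exact: ltW | rewrite oppr_ge0].
    have : 0 <= Na * (- Lf th b) by apply: mulr_ge0; [exact: ltW | rewrite oppr_ge0].
    lra.
  have [z' [hz' hfz']] := @seg_geo _ _ y _ hx hz2 hzL.
  have hTz : T <= cabs (csub x z') + cabs (csub z' y).
    by apply: inf_img_le => // w; rewrite addr_ge0 // cabs_ge0.
  have hprod : Na * Nb <= (dx + eps) * (dy + eps).
    by apply: ler_pM; rewrite ?ltW.
  have hsq : Num.sqrt (N ^+ 2 + 4 * Na * Nb) <= Num.sqrt (N ^+ 2 + 4 * (dx + eps) * (dy + eps)).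
    by apply: ler_wsqrtr; rewrite -!mulrA; lra.
  have hT' : T <= Num.sqrt (N ^+ 2 + 4 * (dx + eps) * (dy + eps)).
    by apply: le_trans hTz (le_trans hfz' (le_trans Hk hsq)).
  have hX : 0 <= N ^+ 2 + 4 * (dx + eps) * (dy + eps).
    by rewrite addr_ge0 ?sqr_ge0 // mulr_ge0 // ?mulr_ge0 //; lra.
  have := sqr_sqrtr hX.
  set s := Num.sqrt _ in hT' *.
  move=> <-.
  have : 0 <= T by apply: ltW.
  nra.
have HT2 : T ^+ 2 <= N ^+ 2 + 4 * dx * dy.
  apply/ler_addgt0Pr => e he.
  set M := 4 * (dx + dy + 1).
  have hM : 0 < M by rewrite /M mulr_gt0 //; lra.
  set eps := Num.min 1 (e / M).
  have heps : 0 < eps by rewrite lt_min ltr01 divr_gt0.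
  have he1 : eps <= 1 by rewrite ge_min lexx.
  have he2 : eps * M <= e by rewrite -ler_pdivlMr // ge_min lexx orbT.
  have he3 : eps * eps <= eps by nra.
  apply: le_trans (Hmain eps heps) _.
  rewrite /M in he2; nra.
have hsq0 : 0 < Num.sqrt (N ^+ 2 + 4 * dx * dy).
  rewrite sqrtr_gt0; have := mulr_ge0 dx0 dy0; have : 0 < N ^+ 2 by rewrite exprn_gt0.
  nra.
have hTs : T <= Num.sqrt (N ^+ 2 + 4 * dx * dy).
  by rewrite -(ger0_norm (ltW hT0)) -sqrtr_sqr; apply: ler_wsqrtr.
by rewrite ler_pM2l // lef_pV2.
Qed.
End Geo.

Theorem theorem3p9 (R : realType) (theta : R) :
  pi <= theta -> theta < 2 * pi ->
  (forall x y : R * R, Stheta theta x -> Stheta theta y ->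
     pG (Stheta theta) x y <= sG (Stheta theta) x y) /\
  (forall c : R, c < 1 -> exists x y : R * R,
     Stheta theta x /\ Stheta theta y /\
     c * sG (Stheta theta) x y < pG (Stheta theta) x y).
Proof.
move=> h1 h2; split.
  by move=> x y hx hy; apply: part1.
move=> c hc.
have hpi := @pi_gt0 R.
have memS : forall k : R, 0 < k -> Stheta theta (0, k).
  move=> k hk; exists k, (pi / 2); split => //; split; first by rewrite divr_gt0.
  split; first lra.
  by rewrite cos_pihalf sin_pihalf mulr0 mulr1.
exists (0, 1), (0, 2); split; first exact: memS.
split; first exact: memS.
have hN : cabs (csub ((0 : R), (1 : R)) (0, 2)) = 1.
  rewrite /cabs /csub /=.
  have -> : (0 - 0 : R) ^+ 2 + (1 - 2) ^+ 2 = 1 by ring.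
  exact: sqrtr1.
have hB := @bdry_eq R theta h1 h2.
have cabs0k : forall k : R, 0 <= k -> cabs (csub ((0 : R), k) (0, 0)) = k.
  move=> k hk; rewrite /cabs /csub /= !subr0 expr0n /= add0r sqrtr_sqr ger0_norm //.
have hd : forall k : R, 0 <= k -> 0 <= dG (Stheta theta) (0, k) <= k.
  move=> k hk; rewrite /dG hB; apply/andP; split.
    by apply: inf_img_ge; [apply: zero_Bs | move=> z _; apply: cabs_ge0].
  rewrite -[X in _ <= X](cabs0k k hk).
  by apply: inf_img_le; [move=> z; apply: cabs_ge0 | apply: zero_Bs].
have hT : 3 <= inf [set cabs (csub ((0 : R), (1 : R)) z) + cabs (csub z (0, 2)) | z in bdry (Stheta theta)].
  rewrite hB; apply: inf_img_ge; first exact: zero_Bs.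
  move=> z [[hz2 _] _].
  have a1 := @abs2_le_cabs R (csub ((0 : R), (1 : R)) z).
  have a2 := @abs2_le_cabs R (csub z ((0 : R), (2 : R))).
  move: a1 a2; rewrite /csub /= (ger0_norm (_ : 0 <= 1 - z.2)) ?(ler0_norm (_ : z.2 - 2 <= 0)); [lra|lra|lra].
have [d10 d11] := andP (hd 1 ler01).
have [d20 d21] := andP (hd 2 ltac:(by [])).
set dx := dG _ (0, 1) in d10 d11.
set dy := dG _ (0, 2) in d20 d21.
set T := inf _ in hT.
have hsq : Num.sqrt (1 ^+ 2 + 4 * dx * dy) <= 3.
  have -> : (3 : R) = Num.sqrt (3 ^+ 2) by rewrite sqrtr_sqr ger0_norm.
  apply: ler_wsqrtr; rewrite expr1n; nra.
have hsq0 : 0 < Num.sqrt (1 ^+ 2 + 4 * dx * dy).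
  rewrite sqrtr_gt0 expr1n; nra.
have hps : sG (Stheta theta) (0, 1) (0, 2) <= pG (Stheta theta) (0, 1) (0, 2).
  rewrite /sG /pG hN -/T -/dx -/dy !mul1r lef_pV2 ?posrE //; first lra.
  lra.
have hs : 0 < sG (Stheta theta) (0, 1) (0, 2).
  by rewrite /sG hN mul1r invr_gt0 -/T; lra.
nra.
Qed.
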